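(* Let $\Gamma$ be a strict finite normal-form game (any number of players, each having at least $2$ strategies) whose preference graph has no sink and no directed cycle of length $4$. Then $\Gamma$ has at least $8$ strategy profiles. Moreover, if $\Gamma$ has exactly $8$ profiles, then $\Gamma$ is a $2\times2\times2$ game and its preference graph is isomorphic (equivalently, equal up to renaming strategies and players) to Jordan's graph.
   Context: A finite normal-form game has players $1,\dots,N$, finite strategy sets $S_1,\dots,S_N$ and utilities $u_i:\prod_j S_j\to\mathbb{R}$; profiles are elements of $Z=\prod_j S_j$. Two distinct profiles are $i$-comparable if they differ only in player $i$'s strategy. The preference graph has node set $Z$ and an arc $p\to q$ between $i$-comparable profiles whenever $u_i(q)\ge u_i(p)$. A game is strict if $u_i(p)\ne u_i(q)$ for all $i$-comparable $p,q$ and all $i$. Jordan's graph (''Mismatching Pennies'') is the preference graph of the three-player game with $S_1=S_2=S_3=\{0,1\}$ in which player $i$ receives payoff $1$ if $s_i\ne s_{i-1}$ and $0$ otherwise (indices mod $3$, so player 1 compares with player 3); i.e. for each $i$ there is an arc from the profile with $s_i=s_{i-1}$ to the $i$-comparable profile with $s_i\neq s_{i-1}$. *)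

(* Defs.v *)
From mathcomp Require Import all_boot all_order all_algebra.
Set Implicit Arguments. Unset Strict Implicit. Unset Printing Implicit Defensive.
Import Order.TTheory GRing.Theory Num.Theory.
Local Open Scope ring_scope.

(* A finite normal-form game with players 'I_N (player i+1 of the paper is i),
   strategy sets S i (finite types), utilities u i : profile -> R. *)
Definition profile (N : nat) (S : 'I_N -> finType) := {dffun forall i : 'I_N, S i}.

Definition icomparable (N : nat) (S : 'I_N -> finType) (i : 'I_N)
  (p q : profile S) : bool :=
  (p != q) && [forall j : 'I_N, (j != i) ==> (p j == q j)].

Definition pref_arc (R : realDomainType) (N : nat) (S : 'I_N -> finType)
  (u : 'I_N -> profile S -> R) (p q : profile S) : bool :=
  [exists i : 'I_N, icomparable i p q && (u i p <= u i q)].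

Definition strict_game (R : realDomainType) (N : nat) (S : 'I_N -> finType)
  (u : 'I_N -> profile S -> R) : Prop :=
  forall (i : 'I_N) (p q : profile S), icomparable i p q -> u i p != u i q.

Definition has_sink (R : realDomainType) (N : nat) (S : 'I_N -> finType)
  (u : 'I_N -> profile S -> R) : Prop :=
  exists p : profile S, forall q : profile S, ~~ pref_arc u p q.

Definition has_cycle4 (R : realDomainType) (N : nat) (S : 'I_N -> finType)
  (u : 'I_N -> profile S -> R) : Prop :=
  exists p0 p1 p2 p3 : profile S,
    [/\ uniq [:: p0; p1; p2; p3], pref_arc u p0 p1, pref_arc u p1 p2,
        pref_arc u p2 p3 & pref_arc u p3 p0].

(* Jordan's "Mismatching Pennies": 3 players, strategies bool,
   player i gets 1 iff s_i <> s_{i-1} (indices mod 3). *)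
Definition jS : 'I_3 -> finType := fun _ => bool.

Definition prev3 (i : 'I_3) : 'I_3 := inZp (i + 2).

Definition jordan_u (R : realDomainType) (i : 'I_3) (s : profile jS) : R :=
  if (s i : bool) != (s (prev3 i) : bool) then 1 else 0.

Definition jordan_arc (R : realDomainType) (p q : profile jS) : bool :=
  pref_arc (@jordan_u R) p q.

(* Main.v *)
Set Warnings "-notation-overridden,-ambiguous-paths".
Require Import Defs.
From mathcomp Require Import all_boot all_order all_algebra.
Import Order.TTheory GRing.Theory Num.Theory.
Set Implicit Arguments. Unset Strict Implicit. Unset Printing Implicit Defensive.

Definition V := (bool * bool * bool)%type.
Definition sel4 (c0 c1 c2 c3 p q : bool) :=
  if p then (if q then c3 else c2) else (if q then c1 else c0).

Definition beq (a b : bool) := if a then b else ~~ b.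
Definition arcT (b0 b1 b2 b3 b4 b5 b6 b7 b8 b9 b10 b11 : bool) (x y : V) : bool :=
  let: (x0,x1,x2) := x in let: (y0,y1,y2) := y in
  [|| ~~ beq x0 y0 && beq x1 y1 && beq x2 y2 && (xorb x0 (sel4 b0 b1 b2 b3 x1 x2)),
      beq x0 y0 && ~~ beq x1 y1 && beq x2 y2 && (xorb x1 (sel4 b4 b5 b6 b7 x0 x2)) |
      beq x0 y0 && beq x1 y1 && ~~ beq x2 y2 && (xorb x2 (sel4 b8 b9 b10 b11 x0 x1))].

Definition jV := arcT true false true false true true false false true false true false.

Definition allb (f : bool -> bool) := if f false then f true else false.
Definition anyb (f : bool -> bool) := if f false then true else f true.
Definition allV (f : V -> bool) := allb (fun a => allb (fun b => allb (fun c => f (a,b,c)))).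
Definition anyV (f : V -> bool) := anyb (fun a => anyb (fun b => anyb (fun c => f (a,b,c)))).

Definition getc (k : nat) (x : V) : bool :=
  match k with 0 => x.1.1 | 1 => x.1.2 | _ => x.2 end.
Definition mkaut (p0 p1 p2 : nat) (m0 m1 m2 : bool) (x : V) : V :=
  (xorb m0 (getc p0 x), xorb m1 (getc p1 x), xorb m2 (getc p2 x)).
Definition perms := [:: (0,1,2); (0,2,1); (1,0,2); (1,2,0); (2,0,1); (2,1,0)]%N.
Definition bools := [:: false; true].
Definition autos : seq (V -> V) :=
  flatten [seq flatten [seq flatten [seq [seq mkaut p.1.1 p.1.2 p.2 m0 m1 m2 | m2 <- bools]
       | m1 <- bools] | m0 <- bools] | p <- perms].

Definition mkv (i j : nat) (c a b : bool) : V :=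
  match i, j with
  | 0, 1 => (a, b, c) | 0, _ => (a, c, b) | _, _ => (c, a, b) end.
Definition faces : seq (V * V * V * V) :=
  flatten [seq flatten [seq
     [:: (mkv ij.1 ij.2 c false false, mkv ij.1 ij.2 c true false,
          mkv ij.1 ij.2 c true true, mkv ij.1 ij.2 c false true);
         (mkv ij.1 ij.2 c false false, mkv ij.1 ij.2 c false true,
          mkv ij.1 ij.2 c true true, mkv ij.1 ij.2 c true false)]
     | c <- bools] | ij <- [:: (0,1); (0,2); (1,2)]%N].

Definition faces_uniq := all (fun t : V * V * V * V =>
   let: (a,b,c,d) := t in uniq [:: a; b; c; d]) faces.
Lemma faces_uniqP : faces_uniq. Proof. by vm_compute. Qed.

Section Check.
Variables (b0 b1 b2 b3 b4 b5 b6 b7 b8 b9 b10 b11 : bool).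
Definition A := arcT b0 b1 b2 b3 b4 b5 b6 b7 b8 b9 b10 b11.
Definition nosinkb := allV (fun x => anyV (fun y => A x y)).
Definition nofaceb := all (fun t : V * V * V * V =>
   let: (a,b,c,d) := t in ~~ [&& A a b, A b c, A c d & A d a]) faces.
Definition isob (s : V -> V) := allV (fun x => allV (fun y => beq (A x y) (jV (s x) (s y)))).
Fixpoint hasL (s : seq (V -> V)) := if s is a :: s' then (if isob a then true else hasL s') else false.
Definition good := if nosinkb then (if nofaceb then hasL autos else true) else true.
End Check.

Definition injb (s : V -> V) := allV (fun x => allV (fun y => (s x == s y) ==> (x == y))).
Lemma autos_inj : all injb autos. Proof. by vm_compute. Qed.
Definition check := allb (fun b0 => allb (fun b1 => allb (fun b2 => allb (fun b3 =>
  allb (fun b4 => allb (fun b5 => allb (fun b6 => allb (fun b7 =>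
  allb (fun b8 => allb (fun b9 => allb (fun b10 => allb (fun b11 =>
   good b0 b1 b2 b3 b4 b5 b6 b7 b8 b9 b10 b11)))))))))))).

Lemma checkP : check. Proof. by vm_compute. Qed.

Lemma allbP f : allb f -> forall b, f b.
Proof. by rewrite /allb; case Ef: (f false); case Et: (f true) => // _ []. Qed.
Lemma allbI (f : bool -> bool) : (forall b, f b) -> allb f.
Proof. by move=> H; rewrite /allb !H. Qed.
Lemma anybP f : anyb f -> exists b, f b.
Proof. by rewrite /anyb; case E: (f false) => H; [exists false | exists true]. Qed.
Lemma anybI (f : bool -> bool) b : f b -> anyb f.
Proof. by rewrite /anyb; case: b => ->; case: (f false). Qed.
Lemma allVP (f : V -> bool) : allV f -> forall x, f x.
Proof. by move=> H [[a b] c]; move: (allbP H a) => /allbP/(_ b)/allbP/(_ c). Qed.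
Lemma allVI (f : V -> bool) : (forall x, f x) -> allV f.
Proof. by move=> H; do 3 apply: allbI => ?. Qed.
Lemma anyVI (f : V -> bool) x : f x -> anyV f.
Proof. by case: x => [[a b] c] H; do 3 apply: (anybI (b := _)); apply: H. Qed.
Lemma beqP a b : beq a b -> a = b. Proof. by case: a b => -[]. Qed.

Section Cube.
Variables (b0 b1 b2 b3 b4 b5 b6 b7 b8 b9 b10 b11 : bool).
Local Notation A := (A b0 b1 b2 b3 b4 b5 b6 b7 b8 b9 b10 b11).
Local Notation isob := (isob b0 b1 b2 b3 b4 b5 b6 b7 b8 b9 b10 b11).
Local Notation hasL := (hasL b0 b1 b2 b3 b4 b5 b6 b7 b8 b9 b10 b11).

Lemma hasLP s : all injb s -> hasL s -> exists2 a, injb a & isob a.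
Proof.
elim: s => //= a s IH /andP [Ia Is]; case E: (isob a) => H; first by exists a.
exact: IH.
Qed.

Lemma goodP : good b0 b1 b2 b3 b4 b5 b6 b7 b8 b9 b10 b11.
Proof.
move: checkP => /allbP/(_ b0)/allbP/(_ b1)/allbP/(_ b2)/allbP/(_ b3)/allbP/(_ b4)/allbP/(_ b5).
by move=> /allbP/(_ b6)/allbP/(_ b7)/allbP/(_ b8)/allbP/(_ b9)/allbP/(_ b10)/allbP/(_ b11).
Qed.

Lemma cube :
  (forall x, exists y, A x y) ->
  (forall a b c d, uniq [:: a; b; c; d] -> ~~ [&& A a b, A b c, A c d & A d a]) ->
  exists s : V -> V, injective s /\ forall x y, A x y = jV (s x) (s y).
Proof.
move=> Hs Hc; move: goodP; rewrite /good.
have -> : nosinkb b0 b1 b2 b3 b4 b5 b6 b7 b8 b9 b10 b11.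
  apply: allVI => x; case: (Hs x) => y; exact: anyVI.
have -> : nofaceb b0 b1 b2 b3 b4 b5 b6 b7 b8 b9 b10 b11.
  apply/allP => -[[[a b] c] d] Hf; apply: Hc.
  by move/allP: faces_uniqP => /(_ _ Hf).
case/(hasLP autos_inj) => s Hi Hiso; exists s; split.
  move=> x y Hxy; have := allVP (allVP Hi x) y; by rewrite Hxy eqxx => /eqP.
by move=> x y; apply: beqP; apply: (allVP (allVP Hiso x) y).
Qed.

End Cube.
Local Open Scope ring_scope.

Section Gen.
Variables (R : realDomainType) (N : nat) (S : 'I_N -> finType)
  (u : 'I_N -> profile S -> R).

Lemma icompP i (p q : profile S) :
  reflect (p != q /\ forall j, j != i -> p j = q j) (icomparable i p q).
Proof.
apply: (iffP andP) => -[H1 H2]; split => //.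
  by move=> j ji; apply/eqP; move/forallP: H2 => /(_ j); rewrite ji.
by apply/forallP => j; apply/implyP => ji; rewrite H2.
Qed.

Lemma icomp_sym i (p q : profile S) : icomparable i p q = icomparable i q p.
Proof.
by apply/icompP/icompP => -[H1 H2]; split; [rewrite eq_sym | move=> j /H2 ->| rewrite eq_sym | move=> j /H2 ->].
Qed.

Lemma icomp_uniq i j (p q : profile S) :
  icomparable i p q -> icomparable j p q -> i = j.
Proof.
move=> /icompP [pq Hi] /icompP [_ Hj]; apply/eqP; apply: contraT => ij.
case/negP: pq; apply/eqP/ffunP => k.
have [ki|ki] := eqVneq k i; last exact: Hi.
by subst k; exact: Hj.
Qed.

Lemma arc_icomp i (p q : profile S) :
  icomparable i p q -> pref_arc u p q = (u i p <= u i q).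
Proof.
move=> Hi; apply/existsP/idP => [[j /andP [Hj Hu]]|H].
  by rewrite (icomp_uniq Hi Hj).
by exists i; rewrite Hi.
Qed.

Lemma flipR (x y : R) : x != y -> (y <= x) = ~~ (x <= y).
Proof. by move=> xy; rewrite leNgt lt_def eq_sym xy. Qed.

Lemma arc_flip i (p q : profile S) : strict_game u ->
  icomparable i p q -> pref_arc u q p = ~~ pref_arc u p q.
Proof.
move=> st Hi; have Hi' : icomparable i q p by rewrite icomp_sym.
by rewrite (arc_icomp Hi) (arc_icomp Hi') flipR // st.
Qed.

Lemma arc_ex (p q : profile S) : pref_arc u p q -> exists i, icomparable i p q /\ u i p <= u i q.
Proof. by case/existsP => i /andP [] *; exists i. Qed.

Lemma argmax_ex (I : finType) (P : pred I) (F : I -> R) i0 : P i0 ->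
  exists i, P i /\ forall j, P j -> F j <= F i.
Proof.
move=> Pi0; case: (arg_maxP F Pi0) => i Pi H; by exists i.
Qed.

End Gen.

Local Open Scope ring_scope.
Definition i0 : 'I_3 := @Ordinal 3 0 isT.
Definition i1 : 'I_3 := @Ordinal 3 1 isT.
Definition i2 : 'I_3 := @Ordinal 3 2 isT.

Lemma ord3P (P : 'I_3 -> Prop) : P i0 -> P i1 -> P i2 -> forall i, P i.
Proof.
move=> H0 H1 H2 [[|[|[|n]]] Hi] //.
- by rewrite (_ : Ordinal Hi = i0) //; apply: val_inj.
- by rewrite (_ : Ordinal Hi = i1) //; apply: val_inj.
- by rewrite (_ : Ordinal Hi = i2) //; apply: val_inj.
Qed.

Lemma exists3 (P : pred 'I_3) : [exists i, P i] = [|| P i0, P i1 | P i2].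
Proof.
apply/existsP/idP => [[i]|]; first by elim/ord3P: i => ->; rewrite ?orbT.
by case/or3P => H; eexists; exact: H.
Qed.

Lemma forall3 (P : pred 'I_3) : [forall i, P i] = [&& P i0, P i1 & P i2].
Proof.
apply/forallP/idP => [H|/and3P [H0 H1 H2] i]; first by rewrite !H.
by elim/ord3P: i.
Qed.

Definition icV (i : 'I_3) (x y : V) :=
  (x != y) && [forall j : 'I_3, (j != i) ==> (getc j x == getc j y)].

Definition prefV (R : realDomainType) (u : 'I_3 -> V -> R) (x y : V) :=
  [exists i, icV i x y && (u i x <= u i y)].

Lemma V_eq (x y : V) : (x == y) = [forall j : 'I_3, getc j x == getc j y].
Proof.
by case: x y => [[a b] c] [[a' b'] c']; rewrite forall3 /= !xpair_eqE andbA.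
Qed.

Section PrefV.
Variables (R : realDomainType) (u : 'I_3 -> V -> R).
Hypothesis st : forall i x y, icV i x y -> u i x != u i y.

Definition bitsU (i : 'I_3) (a b : bool) : bool :=
  if i == i0 then u i0 (false, a, b) <= u i0 (true, a, b)
  else if i == i1 then u i1 (a, false, b) <= u i1 (a, true, b)
  else u i2 (a, b, false) <= u i2 (a, b, true).

Lemma prefV_arcT x y : prefV u x y =
  arcT (bitsU i0 false false) (bitsU i0 false true) (bitsU i0 true false) (bitsU i0 true true)
       (bitsU i1 false false) (bitsU i1 false true) (bitsU i1 true false) (bitsU i1 true true)
       (bitsU i2 false false) (bitsU i2 false true) (bitsU i2 true false) (bitsU i2 true true) x y.
Proof.
rewrite /prefV exists3 /icV !forall3 /bitsU /=.
case: x y => [[a b] c] [[a' b'] c'].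
case: a; case: b; case: c; case: a'; case: b'; case: c' => //=.
all: try reflexivity.
all: rewrite ?orbF flipR; [by [] | apply: st; by rewrite /icV forall3].
Qed.
End PrefV.

Section Transport.
Variables (R : realDomainType) (S : 'I_3 -> finType) (F : V -> profile S).
Hypothesis HF : forall x y (j : 'I_3), (F x j == F y j) = (getc j x == getc j y).
Variable (u : 'I_3 -> profile S -> R).

Lemma transport x y : pref_arc u (F x) (F y) = prefV (fun i z => u i (F z)) x y.
Proof.
rewrite /pref_arc /prefV; apply: eq_existsb => i; congr (_ && _).
rewrite /icomparable /icV; congr (_ && _); last by apply: eq_forallb => j; rewrite HF.
congr negb; rewrite V_eq; apply/eqP/forallP => [E j|H].
  by rewrite -HF E eqxx.
by apply/ffunP => j; apply/eqP; rewrite HF H.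
Qed.

Lemma transport_strict : strict_game u ->
  forall i x y, icV i x y -> u i (F x) != u i (F y).
Proof.
move=> st i x y H; apply: st.
have := transport x y; rewrite /pref_arc /icomparable /prefV /icV.
move: H; rewrite /icV => /andP [H1 H2] _.
apply/andP; split.
  apply: contra H1 => /eqP E; rewrite V_eq; apply/forallP => j; by rewrite -HF E eqxx.
by apply/forallP => j; apply/implyP => ji; rewrite HF; move/forallP: H2 => /(_ j); rewrite ji.
Qed.
End Transport.

Definition fromV (x : V) : profile jS := [ffun i : 'I_3 => getc i x].

Lemma fromV_coord x y (j : 'I_3) : (fromV x j == fromV y j) = (getc j x == getc j y).
Proof. by rewrite !ffunE. Qed.

Lemma prev3E : [/\ prev3 i0 = i2, prev3 i1 = i0 & prev3 i2 = i1].
Proof. by split; apply: val_inj. Qed.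

Lemma prev3_neq i : prev3 i != i.
Proof. by case: prev3E => P0 P1 P2; elim/ord3P: i; rewrite ?P0 ?P1 ?P2. Qed.

Lemma ju_le (R : realDomainType) (b c : bool) :
  ((if b then 1 else 0 : R) <= (if c then 1 else 0)) = (b ==> c).
Proof. by case: b; case: c; rewrite ?lexx ?ler01 ?ler10. Qed.

Lemma ju_neq (R : realDomainType) (b c : bool) :
  ((if b then 1 else 0 : R) != (if c then 1 else 0)) = (b != c).
Proof. by case: b; case: c; rewrite ?eqxx //= ?oner_eq0 // eq_sym oner_eq0. Qed.

Lemma jordan_strict (R : realDomainType) : strict_game (@jordan_u R).
Proof.
move=> i p q /icompP [pq H]; rewrite /jordan_u ju_neq.
have Hp : p (prev3 i) = q (prev3 i).
  by apply: H; apply: prev3_neq.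
have Hi : p i != q i.
  apply: contra pq => /eqP E; apply/eqP/ffunP => j.
  case: (eqVneq j i) => [->|ji]; [exact: E | exact: H].
by rewrite Hp; move: Hi; case: (p i); case: (q i); case: (q (prev3 i)).
Qed.

Definition jbit (i : 'I_3) (a b : bool) : bool :=
  if i == i0 then ~~ b else if i == i1 then ~~ a else ~~ b.

Lemma jordan_V (R : realDomainType) x y : jordan_arc R (fromV x) (fromV y) = jV x y.
Proof.
rewrite /jordan_arc (transport fromV_coord).
rewrite (prefV_arcT (transport_strict fromV_coord (@jordan_strict R))).
have E : forall i a b, bitsU (fun i z => @jordan_u R i (fromV z)) i a b = jbit i a b.
  case: prev3E => P0 P1 P2.
  elim/ord3P; case; case; rewrite /bitsU /jordan_u /= !ffunE ?P0 ?P1 ?P2 /=.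
  all: rewrite ?lexx ?ler01 ?ler10 //.
by rewrite !E.
Qed.

Lemma card_prof N (S : 'I_N -> finType) : #|profile S| = (\prod_(i < N) #|S i|)%N.
Proof. by rewrite /profile card_dep_ffun foldrE big_map big_enum. Qed.

Lemma two_elem (T : finType) (a x y : T) : #|T| = 2%N -> x != a -> y != a -> x = y.
Proof.
move=> HT xa ya; apply/eqP; apply: contraT => xy.
have : (size [:: a; x; y] <= size (enum T))%N.
  apply: uniq_leq_size; last by move=> z; rewrite mem_enum.
  by rewrite /= !inE negb_or eq_sym xa eq_sym ya xy.
by rewrite -cardE HT.
Qed.

Section Cube3.
Variables (R : realDomainType) (S : 'I_3 -> finType) (u : 'I_3 -> profile S -> R).
Hypothesis HS : forall i, #|S i| = 2%N.
Variable p0 : profile S.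

Definition other i : S i := odflt (p0 i) [pick y : S i | y != p0 i].
Lemma other_neq i : other i != p0 i.
Proof.
rewrite /other; case: pickP => //= H.
have : (1 < #|S i|)%N by rewrite HS.
case/card_gt1P => a [b [_ _ ab]].
case: (eqVneq a (p0 i)) => [Ha|Ha]; last by move: (H a); rewrite Ha.
by move: (H b); rewrite -Ha eq_sym ab.
Qed.

Definition dec i (b : bool) : S i := if b then other i else p0 i.
Definition D (x : V) : profile S := [ffun i => dec i (getc i x)].
Definition enc (p : profile S) : V := (p i0 != p0 i0, p i1 != p0 i1, p i2 != p0 i2).

Lemma D_coord x y (j : 'I_3) : (D x j == D y j) = (getc j x == getc j y).
Proof.
rewrite !ffunE /dec; case: (getc j x); case: (getc j y); rewrite ?eqxx //.
  by rewrite (negbTE (other_neq j)).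
by rewrite eq_sym (negbTE (other_neq j)).
Qed.

Lemma D_inj : injective D.
Proof.
move=> x y Hxy; apply/eqP; rewrite V_eq; apply/forallP => j.
by rewrite -D_coord Hxy.
Qed.

Lemma encK : cancel enc D.
Proof.
move=> p; apply/ffunP => j; rewrite ffunE.
suff : dec j (p j != p0 j) = p j.
  by elim/ord3P: j.
rewrite /dec; case: eqP => [->//|/eqP H].
by apply: (two_elem (a := p0 j) (HS j)); [exact: other_neq | exact: H].
Qed.

Lemma DK : cancel D enc.
Proof. by move=> x; apply: D_inj; rewrite encK. Qed.
End Cube3.

Lemma fromV_inj : injective fromV.
Proof.
move=> x y E; apply/eqP; rewrite V_eq; apply/forallP => j.
by rewrite -fromV_coord E eqxx.
Qed.

Lemma card_jS : #|profile jS| = 8%N.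
Proof. by rewrite card_prof (eq_bigr (fun _ => 2%N)) ?big_const_ord // => i _; rewrite card_bool. Qed.

Lemma nosinkE (R : realDomainType) N (S : 'I_N -> finType) (u : 'I_N -> profile S -> R) :
  ~ has_sink u -> forall p, exists q, pref_arc u p q.
Proof.
move=> H p; case: (boolP [exists q, pref_arc u p q]) => [/existsP //|Hn].
exfalso; apply: H; exists p => q; apply/negP => Hq.
by move/negP: Hn; apply; apply/existsP; exists q.
Qed.

Lemma prof_ex N (S : 'I_N -> finType) : (forall i, 0 < #|S i|)%N -> exists p : profile S, True.
Proof.
move=> H; have [g _] : exists g : forall i, S i, forall i : 'I_N, True.
  apply: (@fin_all_exists _ S (fun _ _ => True)) => i.
  by case/card_gt0P: (H i) => y _; exists y.
by exists (finfun g).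
Qed.

Lemma iso222 (R : realDomainType) (S : 'I_3 -> finType) (u : 'I_3 -> profile S -> R) :
  (forall i, #|S i| = 2%N) -> strict_game u -> ~ has_sink u -> ~ has_cycle4 u ->
  exists f : profile S -> profile jS,
    bijective f /\ forall p q : profile S, pref_arc u p q = jordan_arc R (f p) (f q).
Proof.
move=> HS st Hns Hnc.
have [p0 _] := prof_ex (fun i => ltac:(by rewrite HS) : (0 < #|S i|)%N).
pose u' := fun i z => u i (D p0 z).
have HF := D_coord HS p0.
have key : forall x y, pref_arc u (D p0 x) (D p0 y) =
  A (bitsU u' i0 false false) (bitsU u' i0 false true) (bitsU u' i0 true false) (bitsU u' i0 true true)
    (bitsU u' i1 false false) (bitsU u' i1 false true) (bitsU u' i1 true false) (bitsU u' i1 true true)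
    (bitsU u' i2 false false) (bitsU u' i2 false true) (bitsU u' i2 true false) (bitsU u' i2 true true) x y.
  by move=> x y; rewrite (transport HF) (prefV_arcT (transport_strict HF st)).
have Hs : forall x, exists y, A (bitsU u' i0 false false) (bitsU u' i0 false true) (bitsU u' i0 true false) (bitsU u' i0 true true)
    (bitsU u' i1 false false) (bitsU u' i1 false true) (bitsU u' i1 true false) (bitsU u' i1 true true)
    (bitsU u' i2 false false) (bitsU u' i2 false true) (bitsU u' i2 true false) (bitsU u' i2 true true) x y.
  move=> x; have [q Hq] := nosinkE Hns (D p0 x).
  by exists (enc p0 q); rewrite -key (encK HS).
have Hc : forall a b c d, uniq [:: a; b; c; d] -> ~~ [&& A (bitsU u' i0 false false) (bitsU u' i0 false true) (bitsU u' i0 true false) (bitsU u' i0 true true)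
    (bitsU u' i1 false false) (bitsU u' i1 false true) (bitsU u' i1 true false) (bitsU u' i1 true true)
    (bitsU u' i2 false false) (bitsU u' i2 false true) (bitsU u' i2 true false) (bitsU u' i2 true true) a b,
   A (bitsU u' i0 false false) (bitsU u' i0 false true) (bitsU u' i0 true false) (bitsU u' i0 true true)
    (bitsU u' i1 false false) (bitsU u' i1 false true) (bitsU u' i1 true false) (bitsU u' i1 true true)
    (bitsU u' i2 false false) (bitsU u' i2 false true) (bitsU u' i2 true false) (bitsU u' i2 true true) b c,
   A (bitsU u' i0 false false) (bitsU u' i0 false true) (bitsU u' i0 true false) (bitsU u' i0 true true)
    (bitsU u' i1 false false) (bitsU u' i1 false true) (bitsU u' i1 true false) (bitsU u' i1 true true)
    (bitsU u' i2 false false) (bitsU u' i2 false true) (bitsU u' i2 true false) (bitsU u' i2 true true) c d &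
   A (bitsU u' i0 false false) (bitsU u' i0 false true) (bitsU u' i0 true false) (bitsU u' i0 true true)
    (bitsU u' i1 false false) (bitsU u' i1 false true) (bitsU u' i1 true false) (bitsU u' i1 true true)
    (bitsU u' i2 false false) (bitsU u' i2 false true) (bitsU u' i2 true false) (bitsU u' i2 true true) d a].
  move=> a b c d Hu; apply/negP => /and4P [H1 H2 H3 H4]; apply: Hnc.
  exists (D p0 a), (D p0 b), (D p0 c), (D p0 d); split; rewrite ?key //.
  by have := map_inj_uniq (@D_inj _ HS p0) [:: a; b; c; d]; rewrite /= => ->.
have [s [sinj siso]] := @cube
    (bitsU u' i0 false false) (bitsU u' i0 false true) (bitsU u' i0 true false) (bitsU u' i0 true true)
    (bitsU u' i1 false false) (bitsU u' i1 false true) (bitsU u' i1 true false) (bitsU u' i1 true true)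
    (bitsU u' i2 false false) (bitsU u' i2 false true) (bitsU u' i2 true false) (bitsU u' i2 true true)
    Hs Hc.
exists (fun p => fromV (s (enc p0 p))); split.
  apply: inj_card_bij; last by rewrite card_jS card_prof (eq_bigr (fun _ => 2%N)) ?big_const_ord.
  move=> p q /fromV_inj /sinj /(can_inj (encK HS p0)) //.
move=> p q /=; rewrite jordan_V -siso -key.
by rewrite !(encK HS).
Qed.

Section TwoPlayer.
Variables (R : realDomainType) (N : nat) (S : 'I_N -> finType) (u : 'I_N -> profile S -> R).
Variables (k l : 'I_N).
Hypotheses (kl : k != l) (Hkl : forall j, j = k \/ j = l).

Lemma eq_kl (p q : profile S) : p k = q k -> p l = q l -> p = q.
Proof. by move=> Ek El; apply/ffunP => j; case: (Hkl j) => ->. Qed.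

Lemma neq_k (p q : profile S) : p k != q k -> p != q.
Proof. by apply: contraNneq => ->. Qed.

Lemma icl (p q : profile S) : p k = q k -> p != q -> icomparable l p q.
Proof.
move=> Ek pq; apply/icompP; split => // j jl.
by case: (Hkl j) jl => -> //; rewrite eqxx.
Qed.

Lemma ick (p q : profile S) : icomparable k p q -> p l = q l /\ p k != q k.
Proof.
move/icompP => [pq H]; split; first by apply: H; rewrite eq_sym.
by apply: contra pq => /eqP Ek; apply/eqP; apply: eq_kl => //; apply: H; rewrite eq_sym.
Qed.

Lemma icl_k (p q : profile S) : icomparable l p q -> p k = q k.
Proof. by move/icompP => [_ H]; apply: H. Qed.

Lemma two_player : (forall i, 0 < #|S i|)%N -> #|S k| = 2%N -> strict_game u -> ~ has_sink u ->
  has_cycle4 u.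
Proof.
move=> Hpos HSk st Hns.
have [p0 _] := prof_ex Hpos.
have step : forall q : profile S, (forall r : profile S, r k = q k -> u l r <= u l q) ->
    exists q', icomparable k q q' /\ pref_arc u q q'.
  move=> q Hq; have [q' Hq'] := nosinkE Hns q; exists q'; split => //.
  have [i [Hi Hu]] := arc_ex Hq'.
  case: (Hkl i) Hi Hu => -> Hi Hu //; exfalso.
  move: (st l q q' Hi); rewrite eq_le Hu /= => /negP; apply.
  by apply: Hq; rewrite (icl_k Hi).
have [q1 [/eqP Hq1 Mq1]] := argmax_ex (fun q : profile S => u l q) (eqxx (p0 k) : (fun q : profile S => q k == p0 k) p0).
have [q1' [Hk1 A1]] := step q1 (fun r Er => Mq1 r (introT eqP (etrans Er Hq1))).
have [q2 [/eqP Hq2 Mq2]] := argmax_ex (fun q : profile S => u l q) (eqxx (q1' k) : (fun q : profile S => q k == q1' k) q1').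
have [q2' [Hk2 A2]] := step q2 (fun r Er => Mq2 r (introT eqP (etrans Er Hq2))).
have [El1 Nk1] := ick Hk1.
have [El2 Nk2] := ick Hk2.
have E2k : q2' k = q1 k.
  apply: (two_elem (a := q1' k) HSk); last exact: Nk1.
  by rewrite -Hq2 eq_sym.
have Hc : q1' != q2 /\ q2' != q1.
  have H : q1' = q2 -> False.
    move=> E; have E' : q2' = q1.
      by apply: eq_kl => //; rewrite -El2 -E El1.
    subst q2 q2'.
    by move: A2; rewrite (arc_flip st Hk1) A1.
  split; apply/eqP; first exact: H.
  move=> E; apply: H; apply: eq_kl; first by rewrite Hq2.
  by rewrite El2 E El1.
case: Hc => Hc1 Hc2.
exists q1, q1', q2, q2'; split => //.
- rewrite /= !inE !negb_or; apply/and4P; split.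
  + by apply/and3P; split; [exact: neq_k | apply: neq_k; rewrite Hq2 | rewrite eq_sym].
  + by apply/andP; split; [exact: Hc1 | apply: neq_k; rewrite E2k eq_sym].
  + exact: neq_k Nk2.
  + by [].
- rewrite (arc_icomp u (icl (esym Hq2) Hc1)); apply: Mq2; by rewrite eqxx.
- rewrite (arc_icomp u (icl E2k Hc2)); apply: Mq1; by rewrite E2k Hq1.
Qed.
End TwoPlayer.

From mathcomp Require Import zify.

Lemma sink0 (R : realDomainType) (S : 'I_0 -> finType) (u : 'I_0 -> profile S -> R) :
  (forall i, 0 < #|S i|)%N -> has_sink u.
Proof.
move=> H; have [p _] := prof_ex H; exists p => q.
by apply/existsP => -[[]].
Qed.

Lemma sink1 (R : realDomainType) (S : 'I_1 -> finType) (u : 'I_1 -> profile S -> R) :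
  (forall i, 0 < #|S i|)%N -> strict_game u -> has_sink u.
Proof.
move=> H st; have [p0 _] := prof_ex H.
have [q [_ Mq]] := argmax_ex (fun q : profile S => u ord0 q) (isT : predT p0).
exists q => r; apply/negP => /arc_ex [i [Hi Hu]].
rewrite (ord1 i) in Hi Hu.
move: (st ord0 q r Hi); rewrite eq_le Hu /= Mq //.
Qed.

Lemma pow2_le N (S : 'I_N -> finType) : (forall i, 2 <= #|S i|)%N -> (2 ^ N <= #|profile S|)%N.
Proof.
move=> H; rewrite card_prof -{1}(card_ord N) -prod_nat_const.
by apply: leq_prod => i _; exact: H.
Qed.

Lemma I2_cover (j : 'I_2) : j = ord0 \/ j = lift ord0 ord0.
Proof. by case: j => [[|[|?]] ?]; [left | right | ]; try apply: val_inj. Qed.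

Theorem mainTheorem2 (R : realDomainType) (N : nat) (S : 'I_N -> finType)
  (u : 'I_N -> profile S -> R) :
  (forall i : 'I_N, 2 <= #|S i|)%N ->
  strict_game u ->
  ~ has_sink u ->
  ~ has_cycle4 u ->
  (8 <= #|profile S|)%N /\
  (#|profile S| = 8%N ->
     N = 3%N /\ (forall i : 'I_N, #|S i| = 2%N) /\
     exists f : profile S -> profile jS,
       bijective f /\ forall p q : profile S, pref_arc u p q = jordan_arc R (f p) (f q)).
Proof.
move=> H2 st Hns Hnc.
have Hpos : forall i, (0 < #|S i|)%N by move=> i; apply: leq_trans (H2 i).
have Hp := pow2_le H2.
move: N S u H2 st Hns Hnc Hpos Hp.
case=> [|[|[|[|n]]]] S u H2 st Hns Hnc Hpos Hp.
- by exfalso; apply: Hns; apply: sink0.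
- by exfalso; apply: Hns; apply: sink1.
- have Hno : (#|profile S| <= 8)%N -> False.
  have Hcov := I2_cover.
  move=> Hsm; move: Hsm; rewrite card_prof !big_ord_recl big_ord0 muln1 => Hsm.
  have := H2 ord0; have := H2 (lift ord0 ord0).
  rewrite leq_eqVlt => /orP [/eqP E1|L1].
    move=> _; apply: Hnc; apply: (two_player (k := lift ord0 ord0) (l := ord0)) => //.
    by move=> j; case: (Hcov j) => ->; [right | left].
  rewrite leq_eqVlt => /orP [/eqP E0|L0].
    by apply: Hnc; apply: (two_player (k := ord0) (l := lift ord0 ord0)).
  have : (3 * 3 <= #|S ord0| * #|S (lift ord0 ord0)|)%N by apply: leq_mul.
  move=> H9; move: (leq_trans H9 Hsm); by [].
  split; first by rewrite leqNgt; apply/negP => /ltnW/Hno.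
  by move=> E; exfalso; apply: Hno; rewrite E.
- have L2 : lift ord0 (lift ord0 ord0) = i2 :> 'I_3 by apply: val_inj.
  have L1 : lift ord0 ord0 = i1 :> 'I_3 by apply: val_inj.
  have L0 : ord0 = i0 :> 'I_3 by apply: val_inj.
  have Ec : #|profile S| = (#|S i0| * (#|S i1| * #|S i2|))%N.
    by rewrite card_prof !big_ord_recl big_ord0 muln1 L2 L1 L0.
  have A0 := H2 i0; have A1 := H2 i1; have A2 := H2 i2.
  split.
    rewrite Ec; nia.
  move=> E; rewrite Ec in E.
  have Hall : forall i, #|S i| = 2%N.
    elim/ord3P; nia.
  split => //; split => //.
  exact: iso222.
- split; last first.
    move=> E; exfalso; move: Hp; rewrite E !expnS; have := expn_gt0 2 n; lia.
  apply: leq_trans Hp; rewrite !expnS; have := expn_gt0 2 n; lia.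
Qed.
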